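(* Let $r_o>0$, $\tau>0$, $\alpha>0$ and $\beta\in(0,1]$ be constants. For $m<0$, let $u_m:[0,\infty)\to[r_o,\infty)$ be the solution of $$u_m(0)=r_o,\qquad u_m'(s)=\left(1-\frac{2m}{u_m(s)}\right)^{1/2},$$ and set $k=\tau(1-2m/r_o)^{-1/2}$. For $m$ sufficiently negative (so that $\beta>(1+\alpha/2)k^2$), let $A_o(m)$ be the smallest positive root $A$ of $$\beta-k^2-\frac\alpha2A^{-2}u_m^2(Ak)=0.$$ Let $\theta>0$ be the unique positive root of $\theta^3-\frac{3\tau}{2}\left(\frac{\alpha}{2\beta}\right)^{1/2}\theta^2-1=0$. Then $$\lim_{m\to-\infty}A_o(m)=r_o\theta^2\left(\frac{\alpha}{2\beta}\right)^{1/2},\qquad \lim_{m\to-\infty}u_m(A_o(m)k)=r_o\theta^2.$$ *)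

(* Defs.v *)
From Stdlib Require Import Reals.
Open Scope R_scope.

(* u : [0,oo) -> [r_o,oo) solves u(0) = r_o, u'(s) = (1 - 2m/u(s))^(1/2).
   Realised as a total function R -> R; only its values on [0,oo) matter.
   The derivative is required on (0,oo) and u is right-continuous at 0. *)
Definition is_um (ro m : R) (u : R -> R) : Prop :=
  u 0 = ro /\
  (forall s, 0 <= s -> ro <= u s) /\
  (forall eps, 0 < eps -> exists delta, 0 < delta /\
      forall s, 0 <= s < delta -> Rabs (u s - ro) < eps) /\
  (forall s, 0 < s -> derivable_pt_lim u s (sqrt (1 - 2 * m / u s))).

Definition kk (ro tau m : R) : R := tau / sqrt (1 - 2 * m / ro).

Definition smallest_pos_root (f : R -> R) (A : R) : Prop :=
  0 < A /\ f A = 0 /\ (forall B, 0 < B < A -> f B <> 0).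

(* Main.v *)
Require Import Defs.
From Stdlib Require Import Reals.
From Coquelicot Require Import Coquelicot.
From Stdlib Require Import Lra Lia.
Open Scope R_scope.

Definition utf (u : R -> R) := fun x => u (Rmax 0 x).

Lemma ut_ge (ro m : R) u : is_um ro m u -> forall x, ro <= utf u x.
Proof. intros [_ [H _]] x. unfold utf. apply H. apply Rmax_l. Qed.

Lemma ut_der (ro m : R) u : is_um ro m u -> forall x, 0 < x ->
  is_derive (utf u) x (sqrt (1 - 2*m / utf u x)).
Proof.
  intros [_ [_ [_ H]]] x Hx.
  unfold utf at 2. rewrite Rmax_right by lra.
  apply is_derive_ext_loc with u.
  - exists (mkposreal x Hx). intros y Hy. unfold utf.
    unfold ball in Hy; simpl in Hy; unfold AbsRing_ball, abs, minus, plus, opp in Hy; simpl in Hy.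
    apply Rabs_def2 in Hy. rewrite Rmax_right by lra. reflexivity.
  - apply is_derive_Reals. apply H. exact Hx.
Qed.

Lemma ut_cont (ro m : R) u : is_um ro m u -> forall x, 0 <= x -> continuity_pt (utf u) x.
Proof.
  intros Hu x Hx. destruct (Rle_lt_or_eq_dec _ _ Hx) as [Hlt|Heq].
  - apply derivable_continuous_pt. exists (sqrt (1 - 2*m / utf u x)).
    apply is_derive_Reals. eapply ut_der; eauto.
  - subst x. destruct Hu as [H0 [_ [Hc _]]].
    unfold continuity_pt, continue_in, limit1_in, limit_in. intros eps Heps.
    destruct (Hc eps Heps) as [d [Hd Hd2]]. exists d. split; [exact Hd|].
    intros y [_ Hy]. unfold Rdist, R_dist in *. simpl in *. unfold Rdist, R_dist in *. unfold utf.
    rewrite (Rmax_left 0 0) by lra. rewrite H0.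
    destruct (Rle_dec 0 y).
    + rewrite Rmax_right by lra. apply Hd2. replace (y - 0) with y in Hy by ring.
      rewrite Rabs_right in Hy by lra. lra.
    + rewrite Rmax_left by lra. rewrite H0. unfold Rminus. rewrite Rplus_opp_r, Rabs_R0. lra.
Qed.

Lemma u_mono (ro m : R) u : 0 < ro -> m < 0 -> is_um ro m u -> forall a b, 0 <= a <= b -> u a <= u b.
Proof.
  intros Hro Hm Hu a b [Ha Hab].
  destruct (Rle_lt_or_eq_dec _ _ Hab) as [Hlt|Heq]; [|subst; lra].
  destruct (MVT_gen (utf u) a b (fun x => sqrt (1 - 2*m / utf u x))) as [c [Hc Heq]].
  - intros x Hx. rewrite Rmin_left, Rmax_right in Hx by lra. eapply ut_der; eauto. lra.
  - intros x Hx. rewrite Rmin_left, Rmax_right in Hx by lra. eapply ut_cont; eauto. lra.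
  - unfold utf in Heq. rewrite (Rmax_right 0 a), (Rmax_right 0 b) in Heq by lra.
    assert (0 <= sqrt (1 - 2 * m / u (Rmax 0 c)) * (b - a)).
    { apply Rmult_le_pos. apply sqrt_pos. lra. }
    lra.
Qed.

Lemma sqrt_add_le a b : 0 <= a -> 0 <= b -> sqrt (a + b) <= sqrt a + sqrt b.
Proof.
  intros Ha Hb. rewrite <- (sqrt_square (sqrt a + sqrt b)).
  2:{ generalize (sqrt_pos a) (sqrt_pos b); lra. }
  apply sqrt_le_1_alt.
  replace ((sqrt a + sqrt b) * (sqrt a + sqrt b)) with
    (sqrt a * sqrt a + sqrt b * sqrt b + 2 * sqrt a * sqrt b) by ring.
  rewrite !sqrt_sqrt by auto.
  generalize (Rmult_le_pos _ _ (sqrt_pos a) (sqrt_pos b)); lra.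
Qed.

Lemma mvt_bounds ro m u : 0 < ro -> m < 0 -> is_um ro m u -> forall s, 0 < s ->
  sqrt (-2*m) * s <= 2/3 * (u s * sqrt (u s) - ro * sqrt ro) <= (sqrt (-2*m) + sqrt (u s)) * s.
Proof.
  intros Hro Hm Hu s Hs.
  pose (ut := utf u).
  assert (Hge : forall x, ro <= ut x) by (apply (ut_ge ro m u Hu)).
  destruct (MVT_gen (fun x => ut x * sqrt (ut x)) 0 s (fun x => 3/2 * sqrt (ut x - 2*m))) as [c [Hc Heq]].
  - intros x Hx. rewrite Rmin_left, Rmax_right in Hx by lra.
    assert (Hw : 0 < ut x) by (generalize (Hge x); lra).
    assert (Hsw : 0 < sqrt (ut x)) by (apply sqrt_lt_R0; lra).
    assert (Hd := ut_der ro m u Hu x (proj1 Hx)). fold ut in Hd.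
    assert (Hs2 : is_derive sqrt (ut x) (/ (2 * sqrt (ut x)))).
    { apply is_derive_Reals. apply derivable_pt_lim_sqrt. lra. }
    assert (H3 := is_derive_comp sqrt ut x _ _ Hs2 Hd).
    assert (H4 := is_derive_mult ut (fun y => sqrt (ut y)) x _ _ Hd H3 Rmult_comm).
    simpl in H4. unfold plus, mult, scal in H4; simpl in H4. unfold mult in H4; simpl in H4.
    replace (3 / 2 * sqrt (ut x - 2 * m)) with (sqrt (1 - 2 * m / ut x) * sqrt (ut x) +
     ut x * (sqrt (1 - 2 * m / ut x) * / (2 * sqrt (ut x)))); [exact H4|].
    replace (ut x - 2 * m) with ((1 - 2 * m / ut x) * ut x) by (field; lra).
    rewrite sqrt_mult_alt.
    2:{ assert (0 <= - 2 * m / ut x) by (unfold Rdiv; apply Rmult_le_pos; [lra| left; apply Rinv_0_lt_compat; lra]). lra. }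
    pattern (ut x) at 3. rewrite <- (sqrt_sqrt (ut x)) by lra. field. lra.
  - intros x Hx. rewrite Rmin_left, Rmax_right in Hx by lra.
    assert (Hc1 : continuity_pt ut x) by (apply (ut_cont ro m u Hu); lra).
    change (continuity_pt (mult_fct ut (comp sqrt ut)) x).
    apply continuity_pt_mult; [exact Hc1|].
    apply continuity_pt_comp; [exact Hc1|]. apply continuity_pt_sqrt.
    generalize (Hge x); lra.
  - rewrite Rmin_left, Rmax_right in Hc by lra.
    assert (E0 : ut 0 = ro) by (unfold ut, utf; rewrite Rmax_left by lra; apply (proj1 Hu)).
    assert (Es : ut s = u s) by (unfold ut, utf; rewrite Rmax_right by lra; reflexivity).
    rewrite E0, Es in Heq.
    assert (Ec : ut c = u c) by (unfold ut, utf; rewrite Rmax_right by lra; reflexivity).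
    assert (Hmon : u c <= u s) by (apply (u_mono ro m u Hro Hm Hu); lra).
    assert (Hl : sqrt (-2*m) <= sqrt (ut c - 2 * m)).
    { apply sqrt_le_1_alt. generalize (Hge c); lra. }
    assert (Hr : sqrt (ut c - 2 * m) <= sqrt (-2*m) + sqrt (u s)).
    { eapply Rle_trans; [| rewrite Rplus_comm; apply sqrt_add_le; generalize (Hge s); lra].
      apply sqrt_le_1_alt. rewrite Ec. lra. }
    rewrite Rminus_0_r in Heq. rewrite Heq.
    split.
    + replace (2 / 3 * (3 / 2 * sqrt (ut c - 2 * m) * s)) with (sqrt (ut c - 2 * m) * s) by field.
      apply Rmult_le_compat_r; lra.
    + replace (2 / 3 * (3 / 2 * sqrt (ut c - 2 * m) * s)) with (sqrt (ut c - 2 * m) * s) by field.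
      apply Rmult_le_compat_r; lra.
Qed.

Definition hh a x := 1 - a / x - / x ^ 3.

Lemma hh_inv a t : 0 < t -> hh a t = 1 - a * / t - (/ t) ^ 3.
Proof. intros. unfold hh, Rdiv. rewrite pow_inv. reflexivity. Qed.

Lemma hh_incr a x y : 0 < a -> 0 < x < y -> hh a x < hh a y.
Proof.
  intros Ha [Hx Hxy]. rewrite !hh_inv by lra.
  assert (H1 : / y < / x) by (apply Rinv_lt_contravar; nra).
  assert (0 < / y) by (apply Rinv_0_lt_compat; lra).
  assert (H2 : (/ y) ^ 3 < (/ x) ^ 3) by (set (X := / x) in *; set (Y := / y) in *;
      assert (0 < Y * Y) by nra; assert (Y*Y < X*X) by nra; simpl; nra).
  nra.
Qed.

Lemma hh_le a x y : 0 < a -> 0 < x <= y -> hh a x <= hh a y.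
Proof.
  intros Ha [Hx Hxy]. destruct (Rle_lt_or_eq_dec _ _ Hxy).
  - left; apply hh_incr; lra.
  - subst; lra.
Qed.

Lemma hh_root a th : 0 < th -> th ^ 3 - a * th ^ 2 - 1 = 0 -> hh a th = 0.
Proof.
  intros Ht Hr. unfold hh.
  replace (1 - a / th - / th ^ 3) with ((th ^ 3 - a * th ^ 2 - 1) / th ^ 3) by (field; lra).
  rewrite Hr. unfold Rdiv. ring.
Qed.

Lemma t_up a th P Q t e : 0 < a -> 0 < th -> hh a th = 0 -> 0 < e -> 1 <= t ->
  t ^ 3 - 1 <= P * t ^ 2 + Q * t ^ 3 ->
  Rabs (P - a) < hh a (th + e) / 2 -> Q < hh a (th + e) / 2 -> t < th + e.
Proof.
  intros Ha Hth Hr He Ht Hi HP HQ.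
  destruct (Rlt_or_le t (th + e)) as [|Hc]; [assumption|exfalso].
  assert (Hm := hh_le a (th + e) t Ha (conj (ltac:(lra) : 0 < th + e) Hc)).
  rewrite (hh_inv a t) in Hm by lra.
  set (v := / t) in *.
  assert (Hv : t * v = 1) by (unfold v; field; lra).
  assert (Hv0 : 0 < v) by (unfold v; apply Rinv_0_lt_compat; lra).
  assert (Hv1 : v <= 1) by nra.
  assert (Hv3 : 0 <= v ^ 3) by (apply pow_le; lra).
  assert (Hm3 : (t ^ 3 - 1) * v ^ 3 <= (P * t ^ 2 + Q * t ^ 3) * v ^ 3)
    by (apply Rmult_le_compat_r; assumption).
  replace ((t ^ 3 - 1) * v ^ 3) with ((t * v) ^ 3 - v ^ 3) in Hm3 by ring.
  replace ((P * t ^ 2 + Q * t ^ 3) * v ^ 3) with (P * v * (t*v) ^ 2 + Q * (t * v) ^ 3) in Hm3 by ring.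
  rewrite Hv in Hm3.
  assert (Hab : (P - a) * v <= Rabs (P - a)).
  { apply Rle_trans with (Rabs (P - a) * v).
    - apply Rmult_le_compat_r; [lra| apply Rle_abs].
    - generalize (Rabs_pos (P - a)); nra. }
  lra.
Qed.

Lemma t_lo a th P t e : 0 < a -> 0 < e < th -> hh a th = 0 -> 1 <= t ->
  P * t ^ 2 <= t ^ 3 - 1 ->
  Rabs (P - a) < - hh a (th - e) -> th - e < t.
Proof.
  intros Ha He Hr Ht Hi HP.
  destruct (Rlt_or_le (th - e) t) as [|Hc]; [assumption|exfalso].
  assert (Hm := hh_le a t (th - e) Ha (conj (ltac:(lra) : 0 < t) Hc)).
  rewrite (hh_inv a t) in Hm by lra.
  set (v := / t) in *.
  assert (Hv : t * v = 1) by (unfold v; field; lra).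
  assert (Hv0 : 0 < v) by (unfold v; apply Rinv_0_lt_compat; lra).
  assert (Hv1 : v <= 1) by nra.
  assert (Hv3 : 0 <= v ^ 3) by (apply pow_le; lra).
  assert (Hm3 : (P * t ^ 2) * v ^ 3 <= (t ^ 3 - 1) * v ^ 3)
    by (apply Rmult_le_compat_r; assumption).
  replace ((t ^ 3 - 1) * v ^ 3) with ((t * v) ^ 3 - v ^ 3) in Hm3 by ring.
  replace ((P * t ^ 2) * v ^ 3) with (P * v * (t*v) ^ 2) in Hm3 by ring.
  rewrite Hv in Hm3.
  assert (Hab : (a - P) * v <= Rabs (P - a)).
  { apply Rle_trans with (Rabs (P - a) * v).
    - apply Rmult_le_compat_r; [lra|]. rewrite Rabs_minus_sym. apply Rle_abs.
    - generalize (Rabs_pos (P - a)); nra. }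
  lra.
Qed.

Definition cf (ro tau alpha beta y : R) := sqrt (2 * (beta - tau ^ 2 * ro * y) / alpha).
Definition PP ro tau alpha beta y := 3 * tau / (2 * cf ro tau alpha beta y) * sqrt (1 - ro * y).
Definition QQ ro tau alpha beta y := 3 * tau / (2 * cf ro tau alpha beta y) * sqrt (ro * y).

Lemma per_m ro tau alpha beta (um : R -> R) A m :
  0 < ro -> 0 < tau -> 0 < alpha -> m < 0 -> is_um ro m um ->
  beta > (1 + alpha / 2) * (kk ro tau m) ^ 2 ->
  smallest_pos_root (fun A => beta - (kk ro tau m) ^ 2
                 - alpha / 2 * / A ^ 2 * (um (A * kk ro tau m)) ^ 2) A ->
  let y := / (ro - 2 * m) in
  let t := sqrt (um (A * kk ro tau m) / ro) in
  1 <= t /\ PP ro tau alpha beta y * t ^ 2 <= t ^ 3 - 1 /\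
  t ^ 3 - 1 <= PP ro tau alpha beta y * t ^ 2 + QQ ro tau alpha beta y * t ^ 3 /\
  um (A * kk ro tau m) = ro * t ^ 2 /\ A = ro * t ^ 2 * / cf ro tau alpha beta y.
Proof.
  intros Hro Htau Hal Hm Hu Hcond [HA [Heq _]] y t.
  assert (Hy0 : 0 < y) by (unfold y; apply Rinv_0_lt_compat; lra).
  assert (Hyy : y * (ro - 2 * m) = 1) by (unfold y; field; lra).
  assert (Hk : kk ro tau m = tau * sqrt (ro * y)).
  { unfold kk.
    assert (Hp : 0 < 1 - 2 * m / ro).
    { assert (0 < - 2 * m / ro) by (unfold Rdiv; apply Rmult_lt_0_compat; [lra|apply Rinv_0_lt_compat; lra]). lra. }
    assert (H1 : sqrt (1 - 2 * m / ro) * sqrt (ro * y) = 1).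
    { rewrite <- sqrt_mult_alt by lra. replace ((1 - 2 * m / ro) * (ro * y)) with 1; [apply sqrt_1|].
      symmetry; transitivity (y * (ro - 2 * m)); [field; lra| exact Hyy]. }
    assert (0 < sqrt (1 - 2 * m / ro)) by (apply sqrt_lt_R0; lra).
    transitivity (tau / sqrt (1 - 2 * m / ro) * (sqrt (1 - 2 * m / ro) * sqrt (ro * y))); [rewrite H1; ring| field; lra]. }
  set (k := kk ro tau m) in *.
  set (U := um (A * k)) in *.
  set (sy := sqrt (ro * y)) in *.
  assert (Hsy : sy * sy = ro * y) by (unfold sy; apply sqrt_sqrt; nra).
  assert (Hsy0 : 0 < sy) by (unfold sy; apply sqrt_lt_R0; nra).
  assert (Hk2 : k ^ 2 = tau ^ 2 * ro * y) by (rewrite Hk; simpl; nra).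
  assert (HU : ro <= U) by (apply (proj1 (proj2 Hu)); rewrite Hk; apply Rmult_le_pos; nra).
  assert (Hbk : 0 < beta - k ^ 2) by (assert (0 <= k^2) by (apply pow2_ge_0); nra).
  assert (HUA : (U / A) ^ 2 = 2 * (beta - k ^ 2) / alpha).
  { assert (E: beta - k ^ 2 = alpha / 2 * / A ^ 2 * U ^ 2) by lra.
    rewrite E. field. lra. }
  assert (Hcf : cf ro tau alpha beta y = U / A).
  { unfold cf. rewrite <- Hk2, <- HUA. apply sqrt_pow2.
    unfold Rdiv; apply Rmult_le_pos; [lra|left; apply Rinv_0_lt_compat; lra]. }
  set (c := cf ro tau alpha beta y) in *.
  assert (Hc0 : 0 < c) by (rewrite Hcf; unfold Rdiv; apply Rmult_lt_0_compat; [lra|apply Rinv_0_lt_compat; lra]).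
  assert (Ht2 : t ^ 2 = U / ro) by (unfold t; simpl; rewrite Rmult_1_r; apply sqrt_sqrt; unfold Rdiv; apply Rmult_le_pos; [lra|left; apply Rinv_0_lt_compat; lra]).
  assert (HUt : U = ro * t ^ 2) by (rewrite Ht2; field; lra).
  assert (Ht1 : 1 <= t).
  { unfold t. rewrite <- sqrt_1. apply sqrt_le_1_alt.
    apply (Rmult_le_reg_l ro); [lra|]. unfold Rdiv. rewrite Rmult_1_r. field_simplify; lra. }
  set (sr := sqrt ro).
  assert (Hsr : sr * sr = ro) by (apply sqrt_sqrt; lra).
  assert (Hsr0 : 0 < sr) by (apply sqrt_lt_R0; lra).
  assert (HsU : sqrt U = sr * t).
  { rewrite HUt. rewrite sqrt_mult_alt by lra. f_equal. apply sqrt_pow2. lra. }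
  set (s1 := sqrt (1 - ro * y)).
  assert (Hq : sqrt (-2 * m) * sy = sr * s1).
  { unfold sy, sr, s1. rewrite <- !sqrt_mult_alt by nra. f_equal.
    assert (E : -2 * m * y = 1 - ro * y) by (rewrite <- Hyy; ring).
    transitivity (ro * (-2 * m * y)); [ring| rewrite E; reflexivity]. }
  assert (HAc : A = ro * t ^ 2 * / c) by (rewrite Hcf, <- HUt; field; split; lra).
  assert (Hs : 0 < A * k) by (rewrite Hk; apply Rmult_lt_0_compat; [lra| nra]).
  destruct (mvt_bounds ro m um Hro Hm Hu (A * k) Hs) as [Hlo Hup].
  fold U in Hlo, Hup. rewrite HsU in Hlo, Hup. fold sr in Hlo, Hup.
  rewrite HAc, Hk in Hlo, Hup.
  unfold PP, QQ; fold c; fold s1; fold sy.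
  assert (Hpos : 0 < 2 / 3 * ro * sr) by nra.
  split; [exact Ht1|]. split; [|split; [|split; [exact HUt| exact HAc]]].
  - apply (Rmult_le_reg_l (2/3 * ro * sr)); [exact Hpos|].
    replace (2 / 3 * ro * sr * (3 * tau / (2 * c) * s1 * t ^ 2))
      with (sr * s1 * (ro * t ^ 2 * / c * tau)) by (field; lra).
    rewrite <- Hq. rewrite HUt in Hlo. lra.
  - apply (Rmult_le_reg_l (2/3 * ro * sr)); [exact Hpos|].
    replace (2 / 3 * ro * sr * (3 * tau / (2 * c) * s1 * t ^ 2 + 3 * tau / (2 * c) * sy * t ^ 3))
      with ((sr * s1) * (ro * t ^ 2 * / c * tau) + sr * t * (ro * t ^ 2 * / c * (tau * sy))) by (field; lra).
    rewrite <- Hq. rewrite HUt in Hup. lra.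
Qed.

Lemma ball_abs (l e z : R) : ball l e z <-> Rabs (z - l) < e.
Proof. unfold ball; simpl; unfold AbsRing_ball, abs, minus, plus, opp; simpl. tauto. Qed.

Lemma lim_to_eps (g : R -> R) l : filterlim g (Rbar_locally m_infty) (locally l) ->
  forall eps, 0 < eps -> exists M, forall m, m < M -> Rabs (g m - l) < eps.
Proof.
  intros H eps He. apply filterlim_locally with (eps := mkposreal eps He) in H.
  destruct H as [M HM]. exists M. intros m Hm. apply ball_abs. apply HM. exact Hm.
Qed.

Lemma lim_y ro : 0 < ro -> filterlim (fun m => / (ro - 2 * m)) (Rbar_locally m_infty) (locally 0).
Proof.
  intros Hro. apply filterlim_locally. intros [e He]. simpl.
  exists (Rmin 0 (- / (2 * e))). intros m Hm. apply ball_abs.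
  assert (Hm0 : m < 0) by (eapply Rlt_le_trans; [exact Hm| apply Rmin_l]).
  assert (Hm1 : m < - / (2 * e)) by (eapply Rlt_le_trans; [exact Hm| apply Rmin_r]).
  assert (Hp : 0 < / (ro - 2 * m)) by (apply Rinv_0_lt_compat; lra).
  rewrite Rminus_0_r, Rabs_right by lra.
  assert (H2 : / e < ro - 2 * m).
  { assert (/ (2 * e) = / e / 2) by (field; lra). lra. }
  apply Rinv_lt_contravar in H2; [| apply Rmult_lt_0_compat; [apply Rinv_0_lt_compat|]; lra].
  rewrite Rinv_inv in H2. exact H2.
Qed.

Lemma cont_comp_lim (g : R -> R) (f : R -> R) F {FF : Filter F} y0 :
  filterlim f F (locally y0) -> continuity_pt g y0 -> filterlim (fun m => g (f m)) F (locally (g y0)).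
Proof.
  intros Hf Hg. eapply filterlim_comp; [exact Hf|]. apply continuity_pt_filterlim. exact Hg.
Qed.

Theorem mainTheorem7
  (ro tau alpha beta : R) (u : R -> R -> R) (Ao : R -> R) (theta : R)
  (Hro : 0 < ro) (Htau : 0 < tau) (Halpha : 0 < alpha)
  (Hbeta : 0 < beta <= 1)
  (Hu : forall m, m < 0 -> is_um ro m (u m))
  (HAo : forall m, m < 0 ->
     beta > (1 + alpha / 2) * (kk ro tau m) ^ 2 ->
     smallest_pos_root
       (fun A => beta - (kk ro tau m) ^ 2
                 - alpha / 2 * / A ^ 2 * (u m (A * kk ro tau m)) ^ 2)
       (Ao m))
  (Htheta_pos : 0 < theta)
  (Htheta : theta ^ 3 - 3 * tau / 2 * sqrt (alpha / (2 * beta)) * theta ^ 2 - 1 = 0) :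
  (forall eps, 0 < eps -> exists M, forall m, m < M ->
     Rabs (Ao m - ro * theta ^ 2 * sqrt (alpha / (2 * beta))) < eps) /\
  (forall eps, 0 < eps -> exists M, forall m, m < M ->
     Rabs (u m (Ao m * kk ro tau m) - ro * theta ^ 2) < eps).
Proof.
  set (yf := fun m => / (ro - 2 * m)).
  set (a := 3 * tau / 2 * sqrt (alpha / (2 * beta))).
  set (c0 := cf ro tau alpha beta 0).
  assert (Hc0 : c0 = sqrt (2 * beta / alpha)) by (unfold c0, cf; f_equal; field; lra).
  assert (Hc0p : 0 < c0) by (rewrite Hc0; apply sqrt_lt_R0; unfold Rdiv; apply Rmult_lt_0_compat; [lra|apply Rinv_0_lt_compat; lra]).
  assert (Hc0i : / c0 = sqrt (alpha / (2 * beta))).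
  { assert (H1 : c0 * sqrt (alpha / (2 * beta)) = 1).
    { rewrite Hc0, <- sqrt_mult_alt.
      - replace (2 * beta / alpha * (alpha / (2 * beta))) with 1 by (field; lra). apply sqrt_1.
      - unfold Rdiv; apply Rmult_le_pos; [lra|left; apply Rinv_0_lt_compat; lra]. }
    apply (Rmult_eq_reg_l c0); [rewrite H1; field; lra | lra]. }
  assert (Ha : PP ro tau alpha beta 0 = a).
  { unfold PP, a. fold c0. rewrite Rmult_0_r, Rminus_0_r, sqrt_1, <- Hc0i. field. lra. }
  assert (Hapos : 0 < a) by (rewrite <- Ha; unfold PP; fold c0; rewrite Rmult_0_r, Rminus_0_r, sqrt_1;
     apply Rmult_lt_0_compat; [apply Rmult_lt_0_compat; [lra| apply Rinv_0_lt_compat; lra]|lra]).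
  assert (Hq0 : QQ ro tau alpha beta 0 = 0) by (unfold QQ; rewrite Rmult_0_r, sqrt_0; ring).
  assert (Hhth : hh a theta = 0) by (apply hh_root; [lra| exact Htheta]).
  assert (Hy := lim_y ro Hro). fold yf in Hy.
  assert (HPl : filterlim (fun m => PP ro tau alpha beta (yf m)) (Rbar_locally m_infty) (locally a)).
  { rewrite <- Ha. apply cont_comp_lim; try exact Hy; try typeclasses eauto. unfold PP, cf. reg. all: rewrite ?Rmult_0_r, ?Rminus_0_r; try lra. all: apply Rmult_le_pos; [lra| left; apply Rinv_0_lt_compat; lra]. }
  assert (HQl : filterlim (fun m => QQ ro tau alpha beta (yf m)) (Rbar_locally m_infty) (locally 0)).
  { rewrite <- Hq0. apply cont_comp_lim; try exact Hy; try typeclasses eauto. unfold QQ, cf. reg. all: rewrite ?Rmult_0_r, ?Rminus_0_r; try lra. all: apply Rmult_le_pos; [lra| left; apply Rinv_0_lt_compat; lra]. }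
  assert (HCl : filterlim (fun m => / cf ro tau alpha beta (yf m)) (Rbar_locally m_infty) (locally (/ c0))).
  { apply cont_comp_lim with (g := fun y => / cf ro tau alpha beta y); try exact Hy; try typeclasses eauto. unfold cf. reg. all: rewrite ?Rmult_0_r, ?Rminus_0_r; try lra. all: apply Rmult_le_pos; [lra| left; apply Rinv_0_lt_compat; lra]. }
  assert (Hkk : forall m, m < 0 -> kk ro tau m ^ 2 = tau ^ 2 * ro * yf m).
  { intros m Hm. unfold kk, yf.
    assert (Hp : 0 < 1 - 2 * m / ro).
    { assert (0 < - 2 * m / ro) by (unfold Rdiv; apply Rmult_lt_0_compat; [lra|apply Rinv_0_lt_compat; lra]). lra. }
    assert (0 < sqrt (1 - 2 * m / ro)) by (apply sqrt_lt_R0; lra).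
    replace ((tau / sqrt (1 - 2 * m / ro)) ^ 2) with (tau ^ 2 / (sqrt (1 - 2 * m / ro) * sqrt (1 - 2 * m / ro))) by (field; lra).
    rewrite sqrt_sqrt by lra. field. split; lra. }
  set (d0 := beta / ((1 + alpha / 2) * tau ^ 2 * ro)).
  assert (Hd0 : 0 < d0).
  { unfold d0, Rdiv. apply Rmult_lt_0_compat; [lra|]. apply Rinv_0_lt_compat.
    apply Rmult_lt_0_compat; [|lra]. apply Rmult_lt_0_compat; [lra|]. apply pow_lt; lra. }
  assert (HE : Rbar_locally m_infty (fun m => m < 0 /\ beta > (1 + alpha / 2) * (kk ro tau m) ^ 2)).
  { assert (H1 := proj1 (filterlim_locally _ _) Hy (mkposreal d0 Hd0)).
    assert (H0 : Rbar_locally m_infty (fun m : R => m < 0)) by (exists 0; tauto).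
    generalize (filter_and _ _ H0 H1). apply filter_imp. intros m [Hm Hb]. split; [exact Hm|].
    simpl in Hb. apply (proj1 (ball_abs _ _ _)) in Hb. rewrite Hkk by exact Hm.
    assert (Hyp : 0 < yf m) by (unfold yf; apply Rinv_0_lt_compat; lra).
    replace (yf m - 0) with (yf m) in Hb by ring. rewrite Rabs_right in Hb by lra.
    assert (Hpos : 0 < (1 + alpha / 2) * tau ^ 2 * ro).
    { apply Rmult_lt_0_compat; [|lra]. apply Rmult_lt_0_compat; [lra|]. apply pow_lt; lra. }
    unfold d0 in Hb. apply (Rmult_lt_compat_l ((1 + alpha / 2) * tau ^ 2 * ro)) in Hb; [|exact Hpos].
    replace ((1 + alpha / 2) * tau ^ 2 * ro * (beta / ((1 + alpha / 2) * tau ^ 2 * ro))) with beta in Hb by (field; lra).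
    lra. }
  set (tf := fun m => sqrt (u m (Ao m * kk ro tau m) / ro)).
  assert (HB : Rbar_locally m_infty (fun m =>
     1 <= tf m /\ PP ro tau alpha beta (yf m) * tf m ^ 2 <= tf m ^ 3 - 1 /\
     tf m ^ 3 - 1 <= PP ro tau alpha beta (yf m) * tf m ^ 2 + QQ ro tau alpha beta (yf m) * tf m ^ 3 /\
     u m (Ao m * kk ro tau m) = ro * tf m ^ 2 /\ Ao m = ro * tf m ^ 2 * / cf ro tau alpha beta (yf m))).
  { generalize HE. apply filter_imp. intros m [Hm Hc].
    exact (per_m ro tau alpha beta (u m) (Ao m) m Hro Htau Halpha Hm (Hu m Hm) Hc (HAo m Hm Hc)). }
  assert (Ht : filterlim tf (Rbar_locally m_infty) (locally theta)).
  { apply filterlim_locally. intros [eps Heps]. simpl.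
    set (e := Rmin eps (theta / 2)).
    assert (He : 0 < e) by (unfold e; apply Rmin_glb_lt; lra).
    assert (He2 : e <= theta / 2) by apply Rmin_r.
    assert (He3 : e <= eps) by apply Rmin_l.
    assert (H1 : 0 < hh a (theta + e)) by (rewrite <- Hhth; apply hh_incr; lra).
    assert (H2 : 0 < - hh a (theta - e)) by (assert (hh a (theta - e) < hh a theta) by (apply hh_incr; lra); lra).
    assert (HdP : 0 < Rmin (hh a (theta + e) / 2) (- hh a (theta - e))) by (apply Rmin_glb_lt; lra).
    assert (HdQ : 0 < hh a (theta + e) / 2) by lra.
    assert (HP := proj1 (filterlim_locally _ _) HPl (mkposreal _ HdP)).
    assert (HQ := proj1 (filterlim_locally _ _) HQl (mkposreal _ HdQ)).
    refine (filter_imp _ _ _ (filter_and _ _ HB (filter_and _ _ HP HQ))).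
    intros m [[Ht1 [Hlo [Hup _]]] [HPm HQm]].
    apply (proj1 (ball_abs _ _ _)) in HPm. apply (proj1 (ball_abs _ _ _)) in HQm. simpl in HPm, HQm.
    replace (QQ ro tau alpha beta (yf m) - 0) with (QQ ro tau alpha beta (yf m)) in HQm by ring. apply ball_abs.
    assert (Hu1 := t_up a theta _ _ (tf m) e Hapos Htheta_pos Hhth He Ht1 Hup
       (Rlt_le_trans _ _ _ HPm (Rmin_l _ _)) (Rle_lt_trans _ _ _ (Rle_abs _) HQm)).
    assert (Hl1 := t_lo a theta _ (tf m) e Hapos (conj He (ltac:(lra) : e < theta)) Hhth Ht1 Hlo
       (Rlt_le_trans _ _ _ HPm (Rmin_r _ _))).
    apply Rabs_def1; lra. }
  assert (HU : filterlim (fun m => ro * tf m ^ 2) (Rbar_locally m_infty) (locally (ro * theta ^ 2))).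
  { apply cont_comp_lim with (g := fun x => ro * x ^ 2); try exact Ht; try typeclasses eauto. reg. }
  assert (HA : filterlim (fun m => ro * tf m ^ 2 * / cf ro tau alpha beta (yf m)) (Rbar_locally m_infty)
                (locally (ro * theta ^ 2 * / c0))).
  { exact (filterlim_comp_2 _ _ Rmult HU HCl (filterlim_mult (K := R_AbsRing) _ _)). }
  split.
  - rewrite <- Hc0i. apply lim_to_eps.
    refine (filterlim_ext_loc _ _ _ HA).
    refine (filter_imp _ _ _ HB). intros m H. symmetry. apply H.
  - apply lim_to_eps.
    refine (filterlim_ext_loc _ _ _ HU).
    refine (filter_imp _ _ _ HB). intros m H. symmetry. apply H.
Qed.
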